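(* Let $\mathbf{X}=(X_1,\dots,X_p)$ take values in $\{1,\dots,m\}^p$ and $Y$ take values in $\{0,1\}$, and let $\mathcal{C}\neq\emptyset$ be the class of joint distributions of $(\mathbf{X},Y)$ with prescribed pairwise marginals $\mathbb{P}(X_i=x_i,X_j=x_j)=\mu^{ij}_{x_ix_j}$ and $\mathbb{P}(X_i=x_i,Y=y)=\mu^i_{x_iy}$ for all $i,j$, $x_i,x_j$, $y$. Then $$\rho_m^{\mathrm{lb},\mathcal{C}}=\min_{\mathbb{P}_{\mathbf{X},Y}\in\mathcal{C}}\rho_m(\mathbf{X},Y)$$ if and only if there exists a distribution $\mathbb{P}\in\mathcal{C}$ and functions $f_i:\{1,\dots,m\}\to\mathbb{R}$, $i=1,\dots,p$, such that $\mathbb{E}_{\mathbb{P}}[Y\mid\mathbf{X}]=\sum_{i=1}^p f_i(X_i)$.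
   Context: The HGR maximal correlation under a joint law $\mathbb{P}$ is $\rho_m(\mathbf{X},Y)=\sup_{f,g}\mathbb{E}_{\mathbb{P}}[f(\mathbf{X})g(Y)]$ over all functions $f,g$ with $\mathbb{E}[f(\mathbf{X})]=\mathbb{E}[g(Y)]=0$, $\mathbb{E}[f^2(\mathbf{X})]=\mathbb{E}[g^2(Y)]=1$. The quantity $\rho_m^{\mathrm{lb}}(\mathbf{X},Y)$ is defined by the same maximization but with $f$ restricted to separable functions $f(\mathbf{X})=\sum_{i=1}^p\xi_i(X_i)$, $\xi_i:\{1,\dots,m\}\to\mathbb{R}$. This quantity depends only on the pairwise marginals, hence takes the same value for all $\mathbb{P}\in\mathcal{C}$; this common value is denoted $\rho_m^{\mathrm{lb},\mathcal{C}}$. Throughout, $0<\mathbb{P}(Y=1)<1$. *)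

(* Defs.v *)
From HB Require Import structures.
From mathcomp Require Import all_boot all_order all_algebra.
From mathcomp Require Import boolp classical_sets reals.
Set Implicit Arguments. Unset Strict Implicit. Unset Printing Implicit Defensive.
Import Order.TTheory GRing.Theory Num.Theory.
Local Open Scope ring_scope.
Local Open Scope classical_set_scope.

Section Defs.
Variables (R : realType) (p m : nat).

(* values of X = (X_1,...,X_p) in {1..m}^p; {1..m} is encoded as 'I_m *)
Definition Xval := {ffun 'I_p -> 'I_m}.

(* a joint law of (X,Y) on {1..m}^p x {0,1}; Y = 1 is encoded as true *)
Definition is_distr (P : Xval * bool -> R) : Prop :=
  (forall z, 0 <= P z) /\ \sum_(z : Xval * bool) P z = 1.

Definition Exp (P : Xval * bool -> R) (h : Xval -> bool -> R) : R :=
  \sum_(z : Xval * bool) P z * h z.1 z.2.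

Definition classC (mu2 : 'I_p -> 'I_p -> 'I_m -> 'I_m -> R)
    (mu1 : 'I_p -> 'I_m -> bool -> R) (P : Xval * bool -> R) : Prop :=
  is_distr P /\
  (forall i j a b,
     \sum_(z : Xval * bool | (z.1 i == a) && (z.1 j == b)) P z = mu2 i j a b) /\
  (forall i a y,
     \sum_(z : Xval * bool | (z.1 i == a) && (z.2 == y)) P z = mu1 i a y).

Definition admissible (P : Xval * bool -> R) (f : Xval -> R) (g : bool -> R) :=
  [/\ Exp P (fun x _ => f x) = 0, Exp P (fun _ y => g y) = 0,
      Exp P (fun x _ => f x ^+ 2) = 1 & Exp P (fun _ y => g y ^+ 2) = 1].

Definition rho_m (P : Xval * bool -> R) : R :=
  sup [set v | exists (f : Xval -> R) (g : bool -> R),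
        admissible P f g /\ v = Exp P (fun x y => f x * g y)].

Definition rho_lb (P : Xval * bool -> R) : R :=
  sup [set v | exists (xi : 'I_p -> 'I_m -> R) (g : bool -> R),
        let f := fun x : Xval => \sum_(i < p) xi i (x i) in
        admissible P f g /\ v = Exp P (fun x y => f x * g y)].

Definition PX (P : Xval * bool -> R) (x : Xval) : R := P (x, false) + P (x, true).

(* E_P[Y | X = x] = P(X = x, Y = 1) / P(X = x), meaningful when P(X = x) > 0 *)
Definition condExpY (P : Xval * bool -> R) (x : Xval) : R := P (x, true) / PX P x.

End Defs.

(* Main.v *)
Require Import Defs.
From HB Require Import structures.
From mathcomp Require Import all_boot all_order all_algebra.
From mathcomp Require Import boolp classical_sets reals.
From mathcomp Require Import ring lra.
Import Order.TTheory GRing.Theory Num.Theory.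
Local Open Scope ring_scope.
Set Implicit Arguments. Unset Strict Implicit. Unset Printing Implicit Defensive.

Section Proj.
Variables (R : realType) (T : finType) (w : T -> R).
Hypothesis hw : forall x, 0 <= w x.

Definition ipw (a b : T -> R) := \sum_x w x * a x * b x.

Lemma ipwC a b : ipw a b = ipw b a.
Proof. by apply: eq_bigr => x _; rewrite -!mulrA [a x * _]mulrC. Qed.

Lemma ipw_lin a1 a2 c1 c2 b :
  ipw (fun x => c1 * a1 x + c2 * a2 x) b = c1 * ipw a1 b + c2 * ipw a2 b.
Proof.
rewrite /ipw !mulr_sumr -big_split /=; apply: eq_bigr => x _; ring.
Qed.

Lemma ipw_linr a b1 b2 c1 c2 :
  ipw a (fun x => c1 * b1 x + c2 * b2 x) = c1 * ipw a b1 + c2 * ipw a b2.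
Proof. by rewrite ipwC ipw_lin !(ipwC a). Qed.

Lemma ipw_ge0 a : 0 <= ipw a a.
Proof. by apply: sumr_ge0 => x _; rewrite -mulrA mulr_ge0 ?hw // -expr2 sqr_ge0. Qed.

Lemma ipw_zero a b : ipw b b = 0 -> ipw a b = 0.
Proof.
move=> /eqP; rewrite psumr_eq0; last first.
  by move=> x _; rewrite -mulrA mulr_ge0 ?hw // -expr2 ?sqr_ge0.
move=> /allP h; apply: big1 => x _.
have := h x (mem_index_enum x).
rewrite -mulrA mulf_eq0 mulf_eq0 orbb => /orP [/eqP -> | /eqP ->].
  by rewrite !mul0r.
by rewrite mulr0.
Qed.

Lemma ipw_zero_pt b x : ipw b b = 0 -> 0 < w x -> b x = 0.
Proof.
move=> /eqP; rewrite psumr_eq0; last first.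
  by move=> y _; rewrite -mulrA mulr_ge0 ?hw // -expr2 ?sqr_ge0.
move=> /allP h wx; have := h x (mem_index_enum x).
rewrite -mulrA mulf_eq0 mulf_eq0 orbb => /orP [/eqP w0 | /eqP //].
by rewrite w0 ltxx in wx.
Qed.

Fixpoint inspan (vs : seq (T -> R)) (f : T -> R) : Prop :=
  match vs with
  | [::] => forall x, f x = 0
  | v :: vs' => exists a, inspan vs' (fun x => f x - a * v x)
  end.

Lemma inspan_lin vs f g c1 c2 : inspan vs f -> inspan vs g ->
  inspan vs (fun x => c1 * f x + c2 * g x).
Proof.
elim: vs f g => [|v vs IH] f g /=.
  by move=> hf hg x; rewrite hf hg !mulr0 addr0.
move=> [a ha] [b hb]; exists (c1 * a + c2 * b).
have := IH _ _ ha hb; congr inspan; apply: funext => x; ring.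
Qed.

Lemma proj vs s : exists pi, inspan vs pi /\
  forall g, inspan vs g -> ipw (fun x => s x - pi x) g = 0.
Proof.
elim: vs s => [|v vs IH] s.
  exists (fun _ => 0); split => // g hg.
  by apply: big1 => x _; rewrite hg mulr0.
have [pi1 [hpi1 o1]] := IH s.
have [pi' [hpi' o']] := IH v.
set r1 := fun x => s x - pi1 x.
set w' := fun x => v x - pi' x.
have dec : forall g, inspan (v :: vs) g -> exists a k, inspan vs k /\
   g = (fun x => a * w' x + 1 * k x).
  move=> g [a ha]; exists a, (fun x => 1 * (g x - a * v x) + a * pi' x).
  split; first exact: inspan_lin.
  by apply: funext => x; rewrite /w'; ring.
have [z|nz] := eqVneq (ipw w' w') 0.
  exists pi1; split.
    exists 0; congr inspan: hpi1; apply: funext => x; ring.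
  move=> g /dec [a [k [hk ->]]].
  rewrite ipw_linr (ipw_zero _ z) o1 //; ring.
pose al := ipw r1 w' / ipw w' w'.
exists (fun x => pi1 x + al * w' x); split.
  exists al; have := inspan_lin 1 (- al) hpi1 hpi'.
  congr inspan; apply: funext => x; rewrite /w'; ring.
move=> g /dec [a [k [hk ->]]].
have -> : (fun x => s x - (pi1 x + al * w' x)) = (fun x => 1 * r1 x + (- al) * w' x).
  by apply: funext => x; rewrite /r1; ring.
rewrite ipw_linr !ipw_lin.
rewrite /al /r1 /w' (o' k hk) (o1 k hk); by field.
Qed.

End Proj.

Section Sep.
Variables (R : realType) (p m : nat).
Local Notation X := (Xval p m).

Definition sepf (f : X -> R) := exists xi : 'I_p -> 'I_m -> R,
  f = fun x => \sum_(i < p) xi i (x i).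

Lemma sum_pt (I : finType) (c : I) (F : I -> R) :
  \sum_a F a * (c == a)%:R = F c.
Proof.
rewrite (bigD1 c) //= eqxx mulr1 big1 ?addr0 // => a /negbTE.
by rewrite eq_sym => ->; rewrite mulr0.
Qed.

Definition ebas (ia : 'I_p * 'I_m) := fun x : X => (x ia.1 == ia.2)%:R : R.
Definition vsep := map ebas (index_enum ('I_p * 'I_m)%type).

Lemma inspan_sum l (c : 'I_p * 'I_m -> R) :
  inspan (map ebas l) (fun x => \sum_(j <- l) c j * ebas j x).
Proof.
elim: l => [|j l IH] /=; first by move=> x; rewrite big_nil.
exists (c j); congr inspan: IH; apply: funext => x; rewrite big_cons; ring.
Qed.

Lemma sep_inspan f : sepf f -> inspan vsep f.
Proof.
move=> [xi ->]; have := inspan_sum (index_enum _) (fun j => xi j.1 j.2).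
congr inspan; apply: funext => x.
rewrite -(pair_bigA _ (fun i a => xi i a * ebas (i, a) x)) /=.
by apply: eq_bigr => i _; rewrite /ebas /= sum_pt.
Qed.

Lemma sepf_lin f g c1 c2 : sepf f -> sepf g -> sepf (fun x => c1 * f x + c2 * g x).
Proof.
move=> [xi ->] [xi' ->]; exists (fun i b => c1 * xi i b + c2 * xi' i b).
by apply: funext => x; rewrite big_split /= -!mulr_sumr.
Qed.

Lemma sepf_ebas j : sepf (ebas j).
Proof.
exists (fun i b => (b == j.2)%:R * (j.1 == i)%:R); apply: funext => x.
by rewrite (sum_pt j.1 (fun i => (x i == j.2)%:R)).
Qed.

Lemma inspan_sep l f : inspan (map ebas l) f -> sepf f.
Proof.
elim: l f => [|j l IH] f /=.
  move=> h; exists (fun _ _ => 0); apply: funext => x.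
  by rewrite h big1.
move=> [a /IH ha]; have := sepf_lin 1 a ha (sepf_ebas j).
by congr sepf; apply: funext => x; ring.
Qed.

Lemma sepf_const (hp : (0 < p)%N) c : sepf (fun _ => c).
Proof.
exists (fun i _ => c * (Ordinal hp == i)%:R); apply: funext => x.
by rewrite (sum_pt (Ordinal hp) (fun=> c)).
Qed.

End Sep.

Section PSec.
Variables (R : realType) (p m : nat).
Local Notation X := (Xval p m).
Variable P : X * bool -> R.
Hypothesis hP : is_distr P.

Definition wP (x : X) := PX P x.
Definition qP := \sum_(x : X) P (x, true).
Definition sP (x : X) := condExpY P x.

Lemma hwP x : 0 <= wP x.
Proof. by rewrite /wP /PX addr_ge0 //; apply: hP.1. Qed.

Lemma Exp_split h : Exp P h =
  \sum_(x : X) (P (x, false) * h x false + P (x, true) * h x true).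
Proof.
rewrite (eq_bigr (fun x => \sum_b P (x, b) * h x b)); last first.
  by move=> x _; rewrite big_bool /= addrC.
by rewrite pair_bigA; apply: eq_bigr => -[x b].
Qed.

Lemma PtrueE x : P (x, true) = wP x * sP x.
Proof.
have h1 := hP.1 (x, false); have h2 := hP.1 (x, true).
rewrite /sP /condExpY -/(wP x).
have [w0|wn0] := eqVneq (wP x) 0.
  rewrite w0 mul0r; move: w0; rewrite /wP /PX => w0; lra.
by rewrite mulrC divfK.
Qed.

Lemma PfalseE x : P (x, false) = wP x - wP x * sP x.
Proof. by rewrite -PtrueE /wP /PX; ring. Qed.

Lemma sum_false : \sum_(x : X) P (x, false) = 1 - qP.
Proof.
have := hP.2; have -> : \sum_z P z = Exp P (fun _ _ => 1).
  by apply: eq_bigr => z _; rewrite mulr1.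
rewrite Exp_split big_split /= /qP => <-.
under eq_bigr do rewrite mulr1.
under [X in _ = _ + X - _]eq_bigr do rewrite mulr1.
ring.
Qed.

Lemma sumw : \sum_(x : X) wP x = 1.
Proof. by rewrite /wP /PX big_split /= sum_false /qP; ring. Qed.

Local Notation ip := (ipw wP).

Lemma E_f f : Exp P (fun x _ => f x) = ip (fun _ => 1) f.
Proof. by rewrite Exp_split; apply: eq_bigr => x _; rewrite /wP /PX; ring. Qed.

Lemma E_f2 f : Exp P (fun x _ => f x ^+ 2) = ip f f.
Proof. by rewrite Exp_split; apply: eq_bigr => x _; rewrite /wP /PX; ring. Qed.

Lemma E_g g : Exp P (fun _ y => g y) = (1 - qP) * g false + qP * g true.
Proof.
rewrite Exp_split big_split /= -!mulr_suml sum_false /qP; ring.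
Qed.

Lemma E_fg f g : Exp P (fun x y => f x * g y) =
  g false * ip (fun _ => 1) f + (g true - g false) * ip sP f.
Proof.
rewrite Exp_split /ipw !mulr_sumr -big_split /=; apply: eq_bigr => x _.
rewrite PfalseE PtrueE; ring.
Qed.

Lemma E_y : Exp P (fun _ y => (y : nat)%:R) = qP.
Proof. by rewrite Exp_split /qP; apply: eq_bigr => x _ /=; rewrite mulr0n mulr1n mulr0 mulr1 add0r. Qed.

Lemma ip1s : ip (fun _ => 1) sP = qP.
Proof. by rewrite /qP; apply: eq_bigr => x _; rewrite PtrueE mulr1. Qed.

Lemma ip11 : ip (fun _ => 1) (fun _ => 1) = 1.
Proof.
transitivity (\sum_(x : X) wP x); last exact: sumw.
by apply: eq_bigr => x _ /=; rewrite !mulr1.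
Qed.

End PSec.

Lemma ipw_Zr (R : realType) (T : finType) (w : T -> R) a b c :
  ipw w a (fun x => c * b x) = c * ipw w a b.
Proof. by rewrite /ipw mulr_sumr; apply: eq_bigr => x _; ring. Qed.

Section SupSec.
Local Open Scope classical_set_scope.
Variables (R : realType) (p m : nat).
Local Notation X := (Xval p m).
Variable P : X * bool -> R.
Hypothesis hP : is_distr P.
Hypothesis hq : 0 < qP P < 1.

Local Notation ip := (ipw (wP P)).
Local Notation q := (qP P).
Local Notation s := (sP P).

Definition sig := Num.sqrt (q * (1 - q)).

Lemma supval (Sf : (X -> R) -> Prop) (v : X -> R) :
  (forall f, Sf f -> ip (fun _ => 1) f = 0 -> ip s f = ip v f) ->
  ip (fun _ => 1) v = 0 ->
  (0 < ip v v -> Sf (fun x => (Num.sqrt (ip v v))^-1 * v x)) ->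
  sup [set t | exists f g, Sf f /\ admissible P f g /\
                 t = Exp P (fun x y => f x * g y)]
   = Num.sqrt (ip v v) / sig.
Proof.
move=> h1 h2 h3.
have [q0 q1] : 0 < q /\ q < 1 by move/andP: hq.
have sg0 : 0 < sig by rewrite sqrtr_gt0 mulr_gt0 // subr_gt0.
have sg2 : sig ^+ 2 = q * (1 - q) by rewrite sqr_sqrtr // ltW // mulr_gt0 // subr_gt0.
have hw := hwP hP.
have A0 : 0 <= ip v v := ipw_ge0 hw v.
have sA0 : 0 <= Num.sqrt (ip v v) := sqrtr_ge0 _.
have sA2 : Num.sqrt (ip v v) ^+ 2 = ip v v by rewrite sqr_sqrtr.
set A := ip v v in A0 sA0 sA2 h3 *.
set sA := Num.sqrt A in sA0 sA2 h3 *.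
set E := [set t | exists f g, _].
have key : forall t, E t -> t * sig <= sA /\ (A = 0 -> t = 0).
  move=> t [f [g [Sff [[e1 e2 e3 e4] ->]]]].
  rewrite E_f // in e1; rewrite E_g // in e2; rewrite E_f2 // in e3.
  rewrite (E_g hP (fun y => g y ^+ 2)) /= in e4.
  rewrite E_fg // e1 mulr0 add0r (h1 _ Sff e1).
  set c := ip v f; set d := g true - g false.
  have cs : c ^+ 2 <= A.
    have := ipw_ge0 hw (fun x => 1 * v x + (- c) * f x).
    rewrite ipw_lin !ipw_linr (ipwC _ f v) e3 -/A -/c => h; nra.
  have dd : d ^+ 2 * sig ^+ 2 = 1.
    rewrite sg2.
    have -> : d ^+ 2 * (q * (1 - q)) =
       ((1 - q) * g false ^+ 2 + q * g true ^+ 2) -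
       ((1 - q) * g false + q * g true) ^+ 2 by rewrite /d; ring.
    by rewrite e4 e2 expr0n /= subr0.
  split.
    have hu : (d * c * sig) ^+ 2 <= sA ^+ 2.
      rewrite sA2 !exprMn mulrAC dd mul1r //.
    nra.
  move=> A00; rewrite A00 in cs.
  have : c ^+ 2 == 0 by rewrite eq_le cs sqr_ge0.
  by rewrite sqrf_eq0 => /eqP ->; rewrite mulr0.
have [Apos|Ale0] := ltrP 0 A.
  have Ef : E (sA / sig).
    exists (fun x => sA^-1 * v x),
      (fun y : bool => if y then (1 - q) / sig else - q / sig).
    have sAn0 : sA != 0 by rewrite sqrtr_eq0 -ltNge.
    have sgn0 : sig != 0 by rewrite gt_eqF.
    split; first exact: h3.
    have e1 : ip (fun _ => 1) (fun x => sA^-1 * v x) = 0.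
      by rewrite ipw_Zr h2 mulr0.
    split; first split.
    - by rewrite E_f.
    - by rewrite E_g //=; by field.
    - rewrite E_f2 // ipw_Zr ipwC ipw_Zr -/A -sA2; by field.
    - rewrite (E_g hP (fun y : bool => (if y then (1 - q) / sig else - q / sig) ^+ 2)) /=.
      have -> : (1 - q) * (- q / sig) ^+ 2 + q * ((1 - q) / sig) ^+ 2
              = q * (1 - q) / sig ^+ 2 by field.
      by rewrite -sg2 divff // sqrf_eq0.
    rewrite E_fg // e1 mulr0 add0r /= (h1 _ (h3 Apos) e1) ipw_Zr -/A -sA2.
    by field; rewrite sAn0 sgn0.
  have ub : ubound E (sA / sig).
    by move=> t /key [k _]; rewrite ler_pdivlMr.
  apply/le_anti/andP; split.
    by apply: ge_sup => //; exists (sA / sig).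
  by apply: ub_le_sup => //; exists (sA / sig).
have A00 : A = 0 by apply/le_anti/andP.
rewrite /sA A00 sqrtr0 mul0r.
have [[t0 Et0]|ne] := pselect (E !=set0).
  have ub : ubound E 0 by move=> t /key [_ k]; rewrite k.
  apply/le_anti/andP; split; first by apply: ge_sup => //; exists t0.
  have <- : t0 = 0 by have [_ k] := key t0 Et0; exact: k.
  by apply: ub_le_sup => //; exists 0.
by apply: sup_out => -[ne' _]; exact: ne ne'.
Qed.

End SupSec.

Section IpLin.
Variables (R : realType) (T : finType) (w : T -> R).
Lemma ipw_addl a b c : ipw w (fun x => a x + b x) c = ipw w a c + ipw w b c.
Proof. by rewrite /ipw -big_split; apply: eq_bigr => x _ /=; ring. Qed.
Lemma ipw_subl a b c : ipw w (fun x => a x - b x) c = ipw w a c - ipw w b c.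
Proof. by rewrite /ipw -sumrB; apply: eq_bigr => x _ /=; ring. Qed.
Lemma ipw_subkl a k c :
  ipw w (fun x => a x - k) c = ipw w a c - k * ipw w (fun _ => 1) c.
Proof. by rewrite /ipw mulr_sumr -sumrB; apply: eq_bigr => x _ /=; ring. Qed.
Lemma ipw_addr a b c : ipw w c (fun x => a x + b x) = ipw w c a + ipw w c b.
Proof. by rewrite ipwC ipw_addl !(ipwC _ c). Qed.
Lemma ipw_subkr a k c :
  ipw w c (fun x => a x - k) = ipw w c a - k * ipw w (fun _ => 1) c.
Proof. by rewrite ipwC ipw_subkl !(ipwC _ c). Qed.
Lemma ipw_subr a b c : ipw w c (fun x => a x - b x) = ipw w c a - ipw w c b.
Proof. by rewrite ipwC ipw_subl !(ipwC _ c). Qed.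
Lemma ipw_sq_add a b : ipw w (fun x => a x + b x) (fun x => a x + b x) =
  ipw w a a + 2 * ipw w b a + ipw w b b.
Proof.
by rewrite /ipw mulr_sumr -!big_split; apply: eq_bigr => x _ /=; ring.
Qed.
End IpLin.

Section CoreSec.
Local Open Scope classical_set_scope.
Variables (R : realType) (p m : nat).
Local Notation X := (Xval p m).
Variable P : X * bool -> R.
Hypothesis hP : is_distr P.
Hypothesis hq : 0 < qP P < 1.
Hypothesis hp : (0 < p)%N.

Local Notation ip := (ipw (wP P)).
Local Notation q := (qP P).
Local Notation s := (sP P).

Lemma core : exists pi : X -> R, sepf pi /\
  (forall f, sepf f -> ip (fun x => s x - pi x) f = 0) /\
  rho_m P = Num.sqrt (ip (fun x => pi x - q) (fun x => pi x - q)
             + ip (fun x => s x - pi x) (fun x => s x - pi x)) / sig P /\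
  rho_lb P = Num.sqrt (ip (fun x => pi x - q) (fun x => pi x - q)) / sig P.
Proof.
have [pi [hpi ort]] := proj (hwP hP) (vsep R p m) s.
have spi : sepf pi := inspan_sep hpi.
have ort' : forall f, sepf f -> ip (fun x => s x - pi x) f = 0.
  by move=> f hf; apply: ort; apply: sep_inspan.
have one_sep : sepf (fun _ : X => (1 : R)) := sepf_const m hp 1.
have u_sep : sepf (fun x => pi x - q).
  have := sepf_lin 1 (- q) spi one_sep; congr sepf; apply: funext => x; ring.
have ru : ip (fun x => s x - pi x) (fun x => pi x - q) = 0 by apply: ort'.
have ip1r : ip (fun _ => 1) (fun x => s x - pi x) = 0.
  by rewrite ipwC; apply: ort'.
have ip1pi : ip (fun _ => 1) pi = q.
  by move: ip1r; rewrite ipw_subr (ip1s hP) => h; lra.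
exists pi; split => //; split => //; split.
  have -> : rho_m P = sup [set t | exists f g, True /\ admissible P f g /\
                 t = Exp P (fun x y => f x * g y)].
    rewrite /rho_m; congr sup; apply/seteqP; split => t /=.
      by move=> [f [g [ha ->]]]; exists f, g.
    by move=> [f [g [_ [ha ->]]]]; exists f, g.
  rewrite (supval hP hq (v := fun x => (pi x - q) + (s x - pi x))) //.
  - congr (Num.sqrt _ / _).
    rewrite (ipw_sq_add _ (fun x => pi x - q) (fun x => s x - pi x)) ru; ring.
  - move=> f _ e1; rewrite ipw_addl ipw_subkl e1 ipw_subl; ring.
  - rewrite ipw_addr ip1r ipw_subkr ip1pi ip11 //; ring.
have -> : rho_lb P = sup [set t | exists f g, sepf f /\ admissible P f g /\
               t = Exp P (fun x y => f x * g y)].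
  rewrite /rho_lb; congr sup; apply/seteqP; split => t /=.
    move=> [xi [g [ha ->]]]; exists (fun x => \sum_(i < p) xi i (x i)), g.
    by split => //; exists xi.
  by move=> [f [g [[xi ->] [ha ->]]]]; exists xi, g.
rewrite (supval hP hq (v := fun x => pi x - q)) //.
- move=> f hf e1; rewrite ipw_subkl e1 mulr0 subr0.
  have := ort' f hf; rewrite ipw_subl => h; lra.
- by rewrite ipw_subkr ip1pi ip11 // mulr1 subrr.
- move=> _; have := sepf_lin (Num.sqrt (ip (fun x => pi x - q) (fun x => pi x - q)))^-1 0 u_sep u_sep.
  by congr sepf; apply: funext => x; ring.
Qed.

End CoreSec.

Section InvSec.
Local Open Scope classical_set_scope.
Variables (R : realType) (p m : nat).
Local Notation X := (Xval p m).
Variables (mu2 : 'I_p -> 'I_p -> 'I_m -> 'I_m -> R) (mu1 : 'I_p -> 'I_m -> bool -> R).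

Lemma Exp_key (K : finType) (kap : X * bool -> K) (F : K -> R) (P : X * bool -> R) :
  \sum_z P z * F (kap z) = \sum_c F c * \sum_(z | kap z == c) P z.
Proof.
rewrite (partition_big kap xpredT) //=; apply: eq_bigr => c _.
by rewrite mulr_sumr; apply: eq_bigr => z /eqP <-; rewrite mulrC.
Qed.

Lemma inv2 P (hC : classC mu2 mu1 P) i j (F : 'I_m * 'I_m -> R) :
  Exp P (fun x _ => F (x i, x j)) = \sum_c F c * mu2 i j c.1 c.2.
Proof.
rewrite /Exp /= (Exp_key (fun z => (z.1 i, z.1 j)) F P).
apply: eq_bigr => -[a b] _; congr (_ * _); rewrite -(hC.2.1 i j a b).
by apply: eq_bigl => z; rewrite xpair_eqE.
Qed.

Lemma inv1 P (hC : classC mu2 mu1 P) i (F : 'I_m * bool -> R) :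
  Exp P (fun x y => F (x i, y)) = \sum_c F c * mu1 i c.1 c.2.
Proof.
rewrite /Exp /= (Exp_key (fun z => (z.1 i, z.2)) F P).
apply: eq_bigr => -[a b] _; congr (_ * _); rewrite -(hC.2.2 i a b).
by apply: eq_bigl => z; rewrite xpair_eqE.
Qed.

Lemma Exp_sum P (H : 'I_p -> X -> bool -> R) :
  Exp P (fun x y => \sum_(i < p) H i x y) = \sum_(i < p) Exp P (H i).
Proof.
rewrite /Exp /= [RHS]exchange_big /=; apply: eq_bigr => z _.
by rewrite mulr_sumr.
Qed.

Variables (P P0 : X * bool -> R).
Hypotheses (hC : classC mu2 mu1 P) (hC0 : classC mu2 mu1 P0).
Hypothesis hp : (0 < p)%N.

Lemma eq2 i j (F : 'I_m * 'I_m -> R) :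
  Exp P (fun x _ => F (x i, x j)) = Exp P0 (fun x _ => F (x i, x j)).
Proof. by rewrite !inv2. Qed.

Lemma eq1 i (F : 'I_m * bool -> R) :
  Exp P (fun x y => F (x i, y)) = Exp P0 (fun x y => F (x i, y)).
Proof. by rewrite !inv1. Qed.

Lemma rho_lb_inv : rho_lb P = rho_lb P0.
Proof.
pose i0 := Ordinal hp.
have Hf : forall (Q : X * bool -> R) (xi : 'I_p -> 'I_m -> R),
    Exp Q (fun x _ => \sum_(i < p) xi i (x i)) =
    \sum_(i < p) Exp Q (fun x _ => (fun c : 'I_m * 'I_m => xi i c.1) (x i, x i)).
  by move=> Q xi; rewrite Exp_sum.
have Hf2 : forall (Q : X * bool -> R) (xi : 'I_p -> 'I_m -> R),
    Exp Q (fun x _ => (\sum_(i < p) xi i (x i)) ^+ 2) =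
    \sum_(i < p) \sum_(j < p) Exp Q (fun x _ =>
       (fun c : 'I_m * 'I_m => xi i c.1 * xi j c.2) (x i, x j)).
  move=> Q xi.
  have -> : (fun (x : X) (_ : bool) => (\sum_(i < p) xi i (x i)) ^+ 2) =
            (fun (x : X) (_ : bool) => \sum_(i < p) \sum_(j < p) xi i (x i) * xi j (x j)).
    apply: funext => x; apply: funext => y.
    by rewrite expr2 mulr_suml; apply: eq_bigr => i _; rewrite mulr_sumr.
  rewrite Exp_sum; apply: eq_bigr => i _; exact: Exp_sum.
have Hfg : forall (Q : X * bool -> R) (xi : 'I_p -> 'I_m -> R) (g : bool -> R),
    Exp Q (fun x y => (\sum_(i < p) xi i (x i)) * g y) =
    \sum_(i < p) Exp Q (fun x y => (fun c : 'I_m * bool => xi i c.1 * g c.2) (x i, y)).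
  move=> Q xi g.
  have -> : (fun (x : X) (y : bool) => (\sum_(i < p) xi i (x i)) * g y) =
            (fun (x : X) (y : bool) => \sum_(i < p) xi i (x i) * g y).
    by apply: funext => x; apply: funext => y; rewrite mulr_suml.
  exact: Exp_sum.
have Hg : forall (Q : X * bool -> R) (g : bool -> R),
    Exp Q (fun _ y => g y) = Exp Q (fun x y => (fun c : 'I_m * bool => g c.2) (x i0, y)).
  by [].
have Hg2 : forall (Q : X * bool -> R) (g : bool -> R),
    Exp Q (fun _ y => g y ^+ 2) =
    Exp Q (fun x y => (fun c : 'I_m * bool => g c.2 ^+ 2) (x i0, y)).
  by [].
have K : forall xi g,
   (admissible P (fun x => \sum_(i < p) xi i (x i)) g <->
    admissible P0 (fun x => \sum_(i < p) xi i (x i)) g) /\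
   Exp P (fun x y => (\sum_(i < p) xi i (x i)) * g y) =
   Exp P0 (fun x y => (\sum_(i < p) xi i (x i)) * g y).
  move=> xi g.
  have e1 : Exp P (fun x _ => \sum_(i < p) xi i (x i)) =
            Exp P0 (fun x _ => \sum_(i < p) xi i (x i)).
    by rewrite !Hf; apply: eq_bigr => i _; apply: (eq2 i i (fun c => xi i c.1)).
  have e2 : Exp P (fun x _ => (\sum_(i < p) xi i (x i)) ^+ 2) =
            Exp P0 (fun x _ => (\sum_(i < p) xi i (x i)) ^+ 2).
    rewrite !Hf2; apply: eq_bigr => i _; apply: eq_bigr => j _.
    exact: (eq2 i j (fun c => xi i c.1 * xi j c.2)).
  have e3 : Exp P (fun _ y => g y) = Exp P0 (fun _ y => g y).
    by rewrite !Hg; apply: (eq1 i0 (fun c => g c.2)).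
  have e4 : Exp P (fun _ y => g y ^+ 2) = Exp P0 (fun _ y => g y ^+ 2).
    by rewrite !Hg2; apply: (eq1 i0 (fun c => g c.2 ^+ 2)).
  have e5 : Exp P (fun x y => (\sum_(i < p) xi i (x i)) * g y) =
            Exp P0 (fun x y => (\sum_(i < p) xi i (x i)) * g y).
    by rewrite !Hfg; apply: eq_bigr => i _; apply: (eq1 i (fun c => xi i c.1 * g c.2)).
  split => //; rewrite /admissible e1 e2 e3 e4; by [].
rewrite /rho_lb; congr sup; apply/seteqP; split => t /=.
  move=> [xi [g [ha ->]]]; exists xi, g; have [[K1 _] K2] := K xi g.
  by split; [apply: K1 | rewrite K2].
move=> [xi [g [ha ->]]]; exists xi, g; have [[_ K1] K2] := K xi g.
by split; [apply: K1 | rewrite K2].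
Qed.

End InvSec.

Theorem theorem3 (R : realType) (p m : nat)
    (mu2 : 'I_p -> 'I_p -> 'I_m -> 'I_m -> R) (mu1 : 'I_p -> 'I_m -> bool -> R) :
  (0 < p)%N ->
  (exists P : Xval p m * bool -> R, classC mu2 mu1 P) ->
  (forall P : Xval p m * bool -> R, classC mu2 mu1 P ->
     0 < Exp P (fun _ y => (y : nat)%:R) < 1) ->
  forall P0 : Xval p m * bool -> R, classC mu2 mu1 P0 ->
  ((* rho_m^{lb,C} is the minimum of rho_m over C *)
   (exists P : Xval p m * bool -> R, classC mu2 mu1 P /\ rho_m P = rho_lb P0) /\
   (forall P : Xval p m * bool -> R, classC mu2 mu1 P -> rho_lb P0 <= rho_m P))
  <->
  (exists (P : Xval p m * bool -> R) (f : 'I_p -> 'I_m -> R),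
     classC mu2 mu1 P /\
     forall x : Xval p m, 0 < PX P x ->
       condExpY P x = \sum_(i < p) f i (x i)).
Proof.
move=> hp _ hqall P0 hC0.
have hq : forall P, classC mu2 mu1 P -> 0 < qP P < 1.
  by move=> P hC; have := hqall P hC; rewrite E_y.
have lbinv : forall P, classC mu2 mu1 P -> rho_lb P0 = rho_lb P.
  by move=> P hC; exact: (rho_lb_inv hC0 hC hp).
have sgpos : forall P, classC mu2 mu1 P -> 0 < sig P.
  move=> P hC; have /andP [q0 q1] := hq P hC.
  by rewrite sqrtr_gt0 mulr_gt0 // subr_gt0.
have le : forall P, classC mu2 mu1 P -> rho_lb P0 <= rho_m P.
  move=> P hC; rewrite (lbinv P hC).
  have [pi [_ [_ [-> ->]]]] := core hC.1 (hq P hC) hp.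
  apply: ler_wpM2r; first by rewrite invr_ge0 ltW // sgpos.
  apply: ler_wsqrtr; rewrite lerDl; exact: ipw_ge0 (hwP hC.1) _.
split.
  move=> [[P [hC heq]] _].
  have [pi [spi [ort [hm hl]]]] := core hC.1 (hq P hC) hp.
  rewrite (lbinv P hC) hm hl in heq.
  have sn0 : (sig P)^-1 != 0 by rewrite invr_neq0 // gt_eqF // sgpos.
  have h2 := mulIf sn0 heq.
  have hA := ipw_ge0 (hwP hC.1) (fun x => pi x - qP P).
  have hB := ipw_ge0 (hwP hC.1) (fun x => sP P x - pi x).
  have : Num.sqrt (ipw (wP P) (fun x => pi x - qP P) (fun x => pi x - qP P) +
     ipw (wP P) (fun x => sP P x - pi x) (fun x => sP P x - pi x)) ^+ 2 =
     Num.sqrt (ipw (wP P) (fun x => pi x - qP P) (fun x => pi x - qP P)) ^+ 2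
    by rewrite h2.
  rewrite !sqr_sqrtr ?addr_ge0 // => /eqP; rewrite -subr_eq0 addrAC subrr add0r => /eqP B0.
  have [xi hxi] := spi.
  exists P, xi; split => // x wx.
  have := ipw_zero_pt (hwP hC.1) B0 wx => /eqP; rewrite subr_eq0 => /eqP.
  by rewrite /sP hxi.
move=> [P [f [hC hs]]].
have [pi [spi [ort [hm hl]]]] := core hC.1 (hq P hC) hp.
have sS : sepf (fun x : Xval p m => \sum_(i < p) f i (x i)) by exists f.
have B0 : ipw (wP P) (fun x => sP P x - pi x) (fun x => sP P x - pi x) = 0.
  rewrite ipw_subr (ort _ spi) subr0.
  rewrite -(ort _ sS); apply: eq_bigr => x _.
  have := hwP hC.1 x; rewrite le0r => /orP [/eqP -> | wx]; first by rewrite !mul0r.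
  by rewrite /sP hs.
split.
  by exists P; split => //; rewrite (lbinv P hC) hm hl B0 addr0.
exact: le.
Qed.
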